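(* Let $\Omega$ be a topological space and $\mathcal{F}$ a convex cone of continuous real-valued functions on $\Omega$ containing all real constants and satisfying the maximum principle; let $\mathcal{G}$ be the complete lattice cone generated by $\mathcal{F}$. Let $K_1,K_2,\dots$ be non-empty compact $\mathcal{F}$-convex subsets of $\Omega$ with $K_i\subsetneq\operatorname{int}K_{i+1}$ for all $i$ and $\bigcup_{i=1}^\infty K_i=\Omega$. Then there exists a continuous, proper, non-negative function $p\in\mathcal{G}$ such that for every compact $L\subset\Omega$ there are finitely many $f_1,\dots,f_m\in\mathcal{F}$ with $p=\max\{f_1,\dots,f_m\}$ on $L$.
   Context: A compact set $K$ is $\mathcal{F}$-convex if $K=\{\omega\in\Omega\mid f(\omega)\leq\sup f(K)\text{ for all }f\in\mathcal{F}\}$. $\mathcal{F}$ satisfies the maximum principle if for every non-constant $f\in\mathcal{F}$, non-empty compact $K$ and open $U\supset K$, $\sup f(K)<\sup f(U)$. The complete lattice cone generated by $\mathcal{F}$ is the smallest set of functions $\Omega\to(-\infty,\infty]$ containing $\mathcal{F}$, closed under nonnegative linear combinations and pointwise suprema of arbitrary families. Proper: preimages of compact sets are compact. *)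

(* Defs.v *)
From HB Require Import structures.
From mathcomp Require Import all_boot all_order all_algebra.
From mathcomp Require Import all_classical all_reals all_analysis.
Set Implicit Arguments. Unset Strict Implicit. Unset Printing Implicit Defensive.
Import Order.TTheory GRing.Theory Num.Theory numFieldNormedType.Exports.
Local Open Scope classical_set_scope.
Local Open Scope ring_scope.

Section Defs.
Context {R : realType} {T : topologicalType}.

Definition fsup (f : T -> R) (A : set T) : \bar R :=
  ereal_sup [set (f x)%:E | x in A].

Definition convex_cone (F : set (T -> R)) : Prop :=
  forall f g (a b : R), F f -> F g -> 0 <= a -> 0 <= b ->
    F (fun x => a * f x + b * g x).

Definition contains_constants (F : set (T -> R)) : Prop :=
  forall c : R, F (fun _ => c).

Definition max_principle (F : set (T -> R)) : Prop :=
  forall f, F f -> ~ (exists c : R, forall x, f x = c) ->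
  forall K U : set T, K !=set0 -> compact K -> open U -> K `<=` U ->
    (fsup f K < fsup f U)%E.

Definition F_convex (F : set (T -> R)) (K : set T) : Prop :=
  compact K /\ K = [set w | forall f, F f -> ((f w)%:E <= fsup f K)%E].

Definition lattice_cone_closed (F : set (T -> R)) (S : set (T -> \bar R)) : Prop :=
  [/\ forall f, F f -> S (fun x => (f x)%:E),
      forall g h (a b : R), S g -> S h -> 0 <= a -> 0 <= b ->
        S (fun x => (a%:E * g x + b%:E * h x)%E)
    & forall A : set (T -> \bar R), A !=set0 -> A `<=` S ->
        S (fun x => ereal_sup [set g x | g in A])].

Definition gen_lattice_cone (F : set (T -> R)) : set (T -> \bar R) :=
  [set g | forall S, lattice_cone_closed F S -> S g].

Definition proper_fun (p : T -> R) : Prop :=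
  forall C : set R, compact C -> compact (p @^-1` C).

End Defs.

(* Main.v *)
From HB Require Import structures.
From mathcomp Require Import all_boot all_order all_algebra.
From mathcomp Require Import all_classical all_reals all_analysis.
From Stdlib Require List.
Require Import Defs.
Import Order.TTheory GRing.Theory Num.Theory numFieldNormedType.Exports.
Local Open Scope classical_set_scope.
Local Open Scope ring_scope.

Definition superlists {I : Type} : set_system (seq I) :=
  [set P | exists s0 : seq I, forall s, (forall g, List.In g s0 -> List.In g s) -> P s].

Lemma superlists_filter {I : Type} : Filter (@superlists I).
Proof.
constructor.
- by exists [::].
- move=> A B [s0 H0] [s1 H1]; exists (s0 ++ s1) => s Hs; split.
    by apply: H0 => g Hg; apply: Hs; apply: List.in_or_app; left.
  by apply: H1 => g Hg; apply: Hs; apply: List.in_or_app; right.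
- by move=> A B AB [s0 H0]; exists s0 => s Hs; apply: AB; apply: H0.
Qed.

Lemma near2_intro {X : topologicalType} {I : Type} (G : set_system I) (x : X)
  (A : set X) (B : set I) (P : I -> X -> Prop) :
  nbhs x A -> G B -> (forall x' i, A x' -> B i -> P i x') ->
  \forall x' \near x & i \near G, P i x'.
Proof.
move=> nA GB H; exists (A, B) => //= -[a b] [/= Aa Bb]; exact: H.
Qed.

Section Mx.
Context {R : realType} {T : Type}.
Definition mx (s : seq (T -> R)) (x : T) : R :=
  foldr (fun f a => Num.max (f x) a) 0 s.

Lemma mx_ge0 s x : 0 <= mx s x.
Proof. elim: s => [|f s IH] //=; by rewrite le_max IH orbT. Qed.

Lemma mx_ge s f x : List.In f s -> f x <= mx s x.
Proof.
elim: s => [|g s IH] //= [->|H]; first by rewrite le_max lexx.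
by rewrite le_max IH ?orbT.
Qed.

Lemma mx_le s x c : 0 <= c -> (forall f, List.In f s -> f x <= c) -> mx s x <= c.
Proof.
move=> c0; elim: s => [|g s IH] //= H.
rewrite ge_max H /=; last by left.
by apply: IH => f Hf; apply: H; right.
Qed.

Lemma mx_cat s1 s2 x : mx (s1 ++ s2) x = Num.max (mx s1 x) (mx s2 x).
Proof.
elim: s1 => [|g s IH]; first by rewrite /= max_r // mx_ge0.
rewrite /mx /= -/(mx _ x).
by rewrite -/(mx _ x) IH maxA.
Qed.

Lemma mx_att s x : mx s x = 0 \/ exists2 f, List.In f s & mx s x = f x.
Proof.
elim: s => [|g s IH]; first by left.
rewrite /mx /= -/(mx s x).
case: (leP (g x) (mx s x)) => H.
- case: IH => [->|[f Hf ->]]; first by left.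
  by right; exists f => //; right.
- by right; exists g => //; left.
Qed.

Lemma bigmax0_ge0 n (G : 'I_n -> R) : 0 <= \big[Num.max/0]_(i < n) G i.
Proof.
elim: n G => [|n IH] G; first by rewrite big_ord0.
by rewrite big_ord_recl le_max IH orbT.
Qed.

Lemma mx_ord s x : mx s x =
  \big[Num.max/0]_(i < (size s).+1)
     (if val i is k.+1 then nth (fun _ => 0) s k else (fun _ => 0)) x.
Proof.
rewrite big_ord_recl /= max_r; last exact: bigmax0_ge0.
elim: s => [|g s IH] /=; first by rewrite big_ord0.
by rewrite big_ord_recl /= IH.
Qed.

Lemma nth_In_or (s : seq (T -> R)) d k : List.In (nth d s k) s \/ nth d s k = d.
Proof.
elim: s k => [|g s IH] [|k] /=; try by right.
  by left; left.
by case: (IH k) => H; [left; right|right].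
Qed.
End Mx.

Section Main.
Context {R : realType} {Omega : topologicalType} {F : set (Omega -> R)}
  {K : nat -> set Omega}.
Hypotheses (Hcone : convex_cone F) (Hconst : contains_constants F)
  (Hcont : forall f, F f -> continuous f)
  (Hne : forall i, K i !=set0) (Hconv : forall i, F_convex F (K i))
  (Hstr : forall i, K i `<` interior (K i.+1)).

Lemma K_int i : K i `<=` interior (K i.+1).
Proof. exact: (Hstr i).1. Qed.

Lemma K_succ i : K i `<=` K i.+1.
Proof. by move=> x /K_int /interior_subset. Qed.

Lemma K_mono i j : (i <= j)%N -> K i `<=` K j.
Proof.
move=> /subnK <-; elim: (j - i)%N => [|d IH] //= x Kx.
by rewrite addSn; apply: K_succ; apply: IH.
Qed.

Lemma sep i z (r : R) : ~ K i z ->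
  exists g, F g /\ (forall w, K i w -> g w <= 0) /\ r < g z.
Proof.
move=> nKz.
have [_ Keq] := Hconv i.
have : ~ (forall f, F f -> ((f z)%:E <= fsup f (K i))%E).
  by move=> H; apply: nKz; rewrite Keq; exact: H.
move=> /existsNP [f /not_implyP [Ff /negP]]; rewrite -ltNge => Hlt.
have [w Kw] := Hne i.
have Hub : forall w, K i w -> ((f w)%:E <= fsup f (K i))%E.
  by move=> w' Kw'; apply: ereal_sup_ubound; exists w'.
move: Hlt (Hub w Kw) (Hub); rewrite /fsup.
case: (ereal_sup _) => [c| |] //.
move=> czlt _ Hc.
have {}Hc : forall w, K i w -> f w <= c by move=> w' /Hc; rewrite lee_fin.
rewrite lte_fin in czlt.
pose a := (`|r| + 1) / (f z - c).
have d0 : 0 < f z - c by rewrite subr_gt0.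
have r0 : 0 < `|r| + 1 by apply: (lt_le_trans ltr01); rewrite lerDr normr_ge0.
have a0 : 0 < a by rewrite /a divr_gt0.
exists (fun x => a * f x + 1 * (- (a * c))).
split; first by apply: Hcone; [exact: Ff| exact: Hconst | exact: ltW | exact: ler01].
split.
- move=> w' Kw'; rewrite mul1r -mulrN -mulrDr; apply: mulr_ge0_le0; first exact: ltW.
  by rewrite subr_le0; exact: Hc.
- rewrite mul1r -mulrN -mulrDr /a divfK ?gt_eqF //.
  by apply: (le_lt_trans (ler_norm r)); rewrite ltrDl ltr01.
Qed.

Lemma cover_i i : exists s : seq (Omega -> R),
  (forall f, List.In f s -> F f /\ forall w, K i w -> f w <= 0) /\
  (forall x, K i.+2 x -> ~ interior (K i.+1) x ->
     exists2 f, List.In f s & i%:R < f x).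
Proof.
pose A := K i.+2 `&` ~` interior (K i.+1).
have cA : compact A.
  apply: compact_closedI; first exact: (Hconv _).1.
  apply: open_closedC; exact: open_interior.
pose good := fun g : Omega -> R => F g /\ forall w, K i w -> g w <= 0.
pose G := {g : Omega -> R | good g}.
pose P := fun (s : seq G) x => exists2 g : G, List.In g s & i%:R < sval g x.
have := (compact_near_coveringP A).1 cA (seq G) superlists P superlists_filter.
case.
- move=> x [Kx nIx].
  have nKx : ~ K i x by move=> /K_int.
  have [g [Fg [g0 gx]]] := @sep i x i%:R nKx.
  pose gG : G := exist _ g (conj Fg g0).
  apply: (near2_intro superlists x (g @^-1` [set y | i%:R < y]) (fun s => List.In gG s)).
  + apply: open_nbhs_nbhs; split => //; apply: open_comp; last exact: open_gt.
    by move=> y _; exact: Hcont.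
  + by exists [:: gG] => s; apply; left.
  + by move=> x' s' H1 H2; exists gG.
- move=> s0 Hs0.
  have HA := Hs0 s0 (fun g h => h).
  exists (map sval s0); split.
  + by move=> f /List.in_map_iff [g [<- _]]; exact: (svalP g).
  + move=> x Kx nIx; have [g Hg gx] := HA x (conj Kx nIx).
    by exists (sval g) => //; apply: List.in_map.
Qed.
End Main.

Section Constr.
Variables (R : realType) (Omega : topologicalType) (F : set (Omega -> R))
  (K : nat -> set Omega).
Hypotheses (Hcone : convex_cone F) (Hconst : contains_constants F)
  (Hcont : forall f, F f -> continuous f)
  (Hne : forall i, K i !=set0) (Hconv : forall i, F_convex F (K i))
  (Hstr : forall i, K i `<` interior (K i.+1)).
Variable s : nat -> seq (Omega -> R).
Hypothesis Hs : forall i,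
  (forall f, List.In f (s i) -> F f /\ forall w, K i w -> f w <= 0) /\
  (forall x, K i.+2 x -> ~ interior (K i.+1) x ->
     exists2 f, List.In f (s i) & i%:R < f x).
Variable N : Omega -> nat.
Hypothesis HN : forall x, K (N x) x.

Fixpoint S n := if n is n'.+1 then S n' ++ s n' else [::].
Definition P n x := mx (S n) x.
Definition p x := P (N x) x.

Lemma S_in f n : List.In f (S n) -> exists i, List.In f (s i).
Proof.
elim: n => [|n IH] //= /List.in_app_iff [/IH //|H]; by exists n.
Qed.

Lemma in_S {f i n} : (i < n)%N -> List.In f (s i) -> List.In f (S n).
Proof.
elim: n => [|n IH] //; rewrite ltnS leq_eqVlt => /orP [/eqP ->|Hi] H /=;
  apply/List.in_app_iff; [right | left; exact: IH].
done.
Qed.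

Lemma P_stab n d x : K n x -> P (d + n) x = P n x.
Proof.
move=> Kx; elim: d => [|d IH] //.
rewrite addSn /P /= mx_cat -/(P _ x) IH.
have -> : mx (s (d + n)) x = 0.
  apply/eqP; rewrite eq_le mx_ge0 andbT; apply: mx_le => // f Hf.
  apply: ((Hs _).1 f Hf).2; have := @K_mono _ K Hstr n (d + n) (leq_addl _ _); apply; exact: Kx.
by rewrite max_l //; exact: mx_ge0.
Qed.

Lemma pE {j x} : K j x -> p x = P j x.
Proof.
move=> Kj; rewrite /p -(@P_stab (N x) j x (HN x)) -(@P_stab j (N x) x Kj) addnC //.
Qed.

Lemma mx_cont (l : seq (Omega -> R)) : (forall f, List.In f l -> F f) ->
  continuous (mx l).
Proof.
elim: l => [|g l IH] H.
  by move=> x; apply: cvg_cst.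
move=> x; apply: (@continuous_max _ _ g (mx l)).
  by apply: Hcont; apply: H; left.
by apply: IH => f Hf; apply: H; right.
Qed.

Lemma P_cont n : continuous (P n).
Proof.
apply: mx_cont => f /S_in [i Hi]; exact: ((Hs i).1 f Hi).1.
Qed.

Lemma p_cont : continuous p.
Proof.
move=> x; have Kx := HN x.
have Hn : \forall y \near x, P (N x).+1 y = p y.
  apply: (@filterS _ _ _ (interior (K (N x).+1))).
    by move=> y /interior_subset Ky; rewrite (pE Ky).
  apply: open_nbhs_nbhs; split; [exact: open_interior | apply: (K_int Hstr (N x)); exact: Kx].
have Kx1 : K (N x).+1 x by apply: (K_succ Hstr (N x)).
rewrite /continuous_at (pE Kx1).
apply: cvg_trans (near_eq_cvg Hn) _; exact: P_cont.
Qed.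

Lemma p_ge0 x : 0 <= p x.
Proof. exact: mx_ge0. Qed.

Lemma p_big_base {k x} : K k.+2 x -> ~ interior (K k.+1) x -> k%:R < p x.
Proof.
move=> Kx nI; have [f Hf fx] := (Hs k).2 x Kx nI.
rewrite (pE Kx); apply: (lt_le_trans fx); apply: mx_ge.
by apply: (in_S (i := k)).
Qed.

Lemma p_big_aux d {k x} : K (d + k.+2) x -> ~ interior (K k.+1) x -> k%:R < p x.
Proof.
elim: d k => [|d IH] k Kx nI; first exact: p_big_base.
case: (pselect (interior (K k.+2) x)) => H.
  exact: p_big_base (interior_subset H) nI.
apply: (@lt_trans _ _ (k.+1)%:R); first by rewrite ltr_nat.
apply: IH => //; by rewrite -addSnnS.
Qed.

Lemma p_big {k x} : ~ interior (K k.+1) x -> k%:R < p x.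
Proof.
apply: (@p_big_aux (N x)); apply: (K_mono Hstr (N x) _ (leq_addr _ _)); exact: HN.
Qed.

Lemma p_proper : proper_fun p.
Proof.
move=> C cC.
have [M [_ HM]] := compact_bounded cC.
pose M1 := `|M| + 1.
have MM1 : M < M1 by apply: (le_lt_trans (ler_norm M)); rewrite ltrDl ltr01.
have HC := HM M1 MM1.
pose n := Num.Def.archi_bound M1.
have Mn : M1 < n%:R by apply: archi_boundP; rewrite /M1 addr_ge0 // normr_ge0.
apply: (@subclosed_compact _ _ (K n.+1)).
- apply: preimage_closed; first by move=> y _; exact: p_cont.
  exact: (compact_closed (@Rhausdorff R) cC).
- exact: (Hconv _).1.
- move=> x Cx; case: (pselect (interior (K n.+1) x)) => H.
    exact: interior_subset.
  have := p_big H; have := HC _ Cx => /= px1 npx.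
  have : p x < n%:R by apply: (le_lt_trans (ler_norm (p x))); apply: (le_lt_trans px1).
  by rewrite ltNge (ltW npx).
Qed.

Lemma p_gen : gen_lattice_cone F (fun x => (p x)%:E).
Proof.
move=> SS [HF _ Hsup].
pose Fam := [set f : Omega -> R | f = (fun _ => 0) \/ exists i, List.In f (s i)].
pose A := [set (fun x => (f x)%:E) | f in Fam].
have -> : (fun x => (p x)%:E) = (fun x => ereal_sup [set g x | g in A]).
  apply: funext => x; apply/eqP; rewrite eq_le; apply/andP; split.
  - case: (mx_att (S (N x)) x) => [H0|[f Hf Hfx]].
      apply: ereal_sup_ubound; exists (fun _ => 0%:E).
        by exists (fun _ => 0) => //; left.
      by rewrite /p /P H0.
    have [i Hi] := S_in _ _ Hf.
    apply: ereal_sup_ubound; exists (fun x => (f x)%:E).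
      by exists f => //; right; exists i.
    by rewrite /p /P Hfx.
  - apply: ge_ereal_sup => _ [g [f Hf <-] <-]; rewrite lee_fin.
    case: Hf => [->|[i Hi]]; first exact: p_ge0.
    have Kx : K (i.+1 + N x) x.
      by apply: (K_mono Hstr (N x) _ (leq_addl _ _)); exact: HN.
    rewrite (pE Kx); apply: mx_ge; apply: (in_S (i := i)) => //.
    by rewrite ltnS leq_addr.
apply: Hsup.
  by exists (fun _ => 0%:E); exists (fun _ => 0) => //; left.
move=> _ [f Hf <-]; apply: HF; case: Hf => [->|[i Hi]]; first exact: Hconst.
exact: ((Hs i).1 f Hi).1.
Qed.

Lemma p_loc L : compact L -> exists (m : nat) (f : 'I_m.+1 -> Omega -> R),
  (forall i, F (f i)) /\
  (forall x, L x -> p x = \big[Num.max/f ord0 x]_(i < m.+1) f i x).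
Proof.
move=> cL.
have := (compact_near_coveringP L).1 cL nat eventually (fun n x => K n x) _.
case.
- move=> x Lx.
  apply: (near2_intro eventually x (interior (K (N x).+1)) [set n | ((N x).+1 <= n)%N]).
  + apply: open_nbhs_nbhs; split; first exact: open_interior.
    apply: (K_int Hstr (N x)); exact: HN.
  + by exists (N x).+1.
  + move=> x' n /interior_subset Kx' Hn; exact: (K_mono Hstr _ _ Hn).
- move=> j _ Hj; have HL := Hj j (leqnn j).
  exists (size (S j)).
  exists (fun i : 'I_(size (S j)).+1 =>
    if val i is k.+1 then nth (fun _ => 0) (S j) k else (fun _ => 0)).
  split.
  + case=> [[|k] Hk] /=; first exact: Hconst.
    case: (nth_In_or (S j) (fun _ => 0) k) => [H|->]; last exact: Hconst.
    have [i' Hi'] := S_in _ _ H; exact: ((Hs i').1 _ Hi').1.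
  + move=> x Lx; rewrite (pE (HL x Lx)) /P; exact: mx_ord.
Qed.
End Constr.

Theorem mainTheorem13 (R : realType) (Omega : topologicalType)
  (F : set (Omega -> R)) (K : nat -> set Omega) :
  convex_cone F -> contains_constants F ->
  (forall f, F f -> continuous f) ->
  max_principle F ->
  (forall i, K i !=set0) ->
  (forall i, F_convex F (K i)) ->
  (forall i, K i `<` interior (K i.+1)) ->
  \bigcup_i K i = setT ->
  exists p : Omega -> R,
    [/\ continuous p, proper_fun p, (forall x, 0 <= p x),
        gen_lattice_cone F (fun x => (p x)%:E)
      & forall L : set Omega, compact L ->
          exists (m : nat) (f : 'I_m.+1 -> Omega -> R),
            (forall i, F (f i)) /\
            (forall x, L x -> p x = \big[Num.max/f ord0 x]_(i < m.+1) f i x)].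
Proof.
move=> Hcone Hconst Hcont Hmax Hne Hconv Hstr Hcov.
have [s Hs] := choice (cover_i Hcone Hconst Hcont Hne Hconv Hstr).
have : forall x, exists n, K n x.
  by move=> x; have : [set: Omega] x by []; rewrite -Hcov => -[n _ Kn]; exists n.
move=> /choice [N HN].
exists (@p R Omega s N); split.
- exact: (@p_cont _ _ _ _ Hcont Hstr _ Hs _ HN).
- exact: (@p_proper _ _ _ _ Hcont Hconv Hstr _ Hs _ HN).
- exact: p_ge0.
- exact: (@p_gen _ _ _ _ Hconst Hstr _ Hs _ HN).
- move=> L cL; exact: (@p_loc _ _ _ _ Hconst Hstr _ Hs _ HN _ cL).
Qed.
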